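(* In $\mathbb{R}^3$ write $z=(z_1,\mathbf z_2)$ with $\mathbf z_2\in\mathbb{R}^2$. For $k\in\mathbb{N}$, $r>0$ let $C_{k,r}=[k,k+\tfrac14]\times D_r$, where $D_r\subset\mathbb{R}^2$ is the disc of radius $r$ centred at $0$. For $r\in(0,e^{-1})$ let $f(r)=\frac{1}{r|\ln r|\ln|\ln r|}$, and for $n\in\mathbb{N}$, $z\in\mathbb{R}^3$ let $V_n(z)=f\big(\tfrac{z_1}{25n}\big)\sum_{k=1}^n\mathbf 1_{C_{k,\sqrt{k/(25n)}}}(z)$ (and $V_n(z)=0$ off the union of these cylinders). Then $$\lim_{\varepsilon\to0^+}\ \sup_{x\in\mathbb{R}^3,\ n\in\mathbb{N}}\int_{|z-x|<\varepsilon}\frac{|V_n(z)|}{|z-x|}\,dz=0.$$ *)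

(* Defs.v *)
From mathcomp Require Import all_boot all_order all_algebra.
From mathcomp Require Import all_classical all_reals all_analysis.
Import Order.TTheory GRing.Theory Num.Theory.

Set Implicit Arguments.
Unset Strict Implicit.
Unset Printing Implicit Defensive.

Local Open Scope ring_scope.
Local Open Scope classical_set_scope.

(* Points of R^3 are triples z = (z1, z21, z22) : R * R * R, i.e.
   z.1.1 = z_1 and (z.1.2, z.2) = bold z_2 in R^2. *)

Definition leb3 (R : realType) :=
  ((@lebesgue_measure R \x @lebesgue_measure R) \x @lebesgue_measure R)%E.

Definition dist3 (R : realType) (z x : R * R * R) : R :=
  Num.sqrt ((z.1.1 - x.1.1) ^+ 2 + (z.1.2 - x.1.2) ^+ 2 + (z.2 - x.2) ^+ 2).

Definition f_fun (R : realType) (r : R) : R :=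
  (r * `|ln r| * ln `|ln r|)^-1.

Definition cyl (R : realType) (k : nat) (r : R) : set (R * R * R) :=
  [set z | k%:R <= z.1.1 <= k%:R + 4^-1 /\ z.1.2 ^+ 2 + z.2 ^+ 2 <= r ^+ 2].

Definition Vn (R : realType) (n : nat) (z : R * R * R) : R :=
  f_fun (z.1.1 / (25 * n%:R)) *
  \sum_(1 <= k < n.+1) \1_(cyl k (Num.sqrt (k%:R / (25 * n%:R)))) z.

Definition Kint (R : realType) (eps : R) (x : R * R * R) (n : nat) : \bar R :=
  (\int[@leb3 R]_(z in [set z | (dist3 z x < eps)%R])
      (`|Vn n z| / dist3 z x)%:E)%E.

Definition Ksup (R : realType) (eps : R) : \bar R :=
  ereal_sup [set y | exists (x : R * R * R) (n : nat), y = Kint eps x n].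

(* Main.v *)
Require Import Defs.
From mathcomp Require Import all_boot all_order all_algebra.
From mathcomp Require Import all_classical all_reals all_analysis.
Import Order.TTheory GRing.Theory Num.Theory.
From mathcomp Require Import lra ring.
Local Open Scope ring_scope.
Local Open Scope classical_set_scope.
Section S. Variable R : realType.
Local Open Scope ereal_scope.
Definition box (x : R * R * R) (s rho : R) : set (R * R * R) :=
  ([set` `[x.1.1 - s, x.1.1 + s]%R] `*` ([set` `[x.1.2 - s, x.1.2 + s]%R] `&` [set` `[- rho, rho]%R]))
  `*` ([set` `[x.2 - s, x.2 + s]%R] `&` [set` `[- rho, rho]%R]).
Lemma mbox x s rho : measurable (box x s rho).
Proof. apply: measurableX; first apply: measurableX.
all: try apply: measurableI. all: exact: measurable_itv. Qed.
Lemma leb3_box x s rho : @leb3 R (box x s rho) = 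
  lebesgue_measure [set` `[x.1.1 - s, x.1.1 + s]%R] *
  lebesgue_measure ([set` `[x.1.2 - s, x.1.2 + s]%R] `&` [set` `[- rho, rho]%R]) *
  lebesgue_measure ([set` `[x.2 - s, x.2 + s]%R] `&` [set` `[- rho, rho]%R]).
Proof.
have h1 := @product_measure1E _ _ _ _ R (@lebesgue_measure R \x @lebesgue_measure R)%E (@lebesgue_measure R).
have h2 := @product_measure1E _ _ _ _ R (@lebesgue_measure R) (@lebesgue_measure R).
rewrite /leb3 /box h1; last 2 first.
- apply: measurableX; [exact: measurable_itv| apply: measurableI; exact: measurable_itv].
- apply: measurableI; exact: measurable_itv.
congr (_ * _); apply: h2; [exact: measurable_itv| apply: measurableI; exact: measurable_itv].
Qed.

Lemma leb_itvI (a b c e : R) : (a <= b)%R ->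
  lebesgue_measure ([set` `[a, b]%R] `&` [set` `[c, e]%R]) <= (b - a)%:E.
Proof.
move=> ab; have E := lebesgue_measure_itv `[a, b]%R.
apply: (@le_trans _ _ (lebesgue_measure [set` `[a, b]%R])).
  apply: le_measure; last exact: subIsetl.
  - by rewrite inE; apply: measurableI; exact: measurable_itv.
  - by rewrite inE; exact: measurable_itv.
by rewrite E /= lte_fin; case: ltgtP ab => //= ->; rewrite subrr.
Qed.

Lemma int_le_T d (T : measurableType d) (mu : {measure set T -> \bar R}) (D : set T)
  (f g : T -> \bar R) : (forall x, D x -> 0 <= f x) -> (forall x, 0 <= g x) ->
  (forall x, D x -> f x <= g x) -> \int[mu]_(x in D) f x <= \int[mu]_x g x.
Proof.
move=> f0 g0 fg; rewrite ge0_integralE // ge0_integralTE //.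
apply: ereal_sup_le => _ [h hf <-]; exists h => //= t.
apply: (le_trans (hf t)); rewrite /patch; case: ifP; rewrite ?inE.
  by move=> Dt; exact: fg.
by move=> _; exact: g0.
Qed.
Local Close Scope ereal_scope.
Implicit Types eps d : R.

Lemma half_pow_gt0 eps j : 0 < eps -> 0 < eps * (2^-1) ^+ j.
Proof. by move=> e0; rewrite mulr_gt0 // exprn_gt0 // invr_gt0. Qed.

Lemma dyadic eps d : 0 < d -> d < eps ->
  exists j, eps * (2^-1) ^+ j.+1 <= d /\ d < eps * (2^-1) ^+ j.
Proof.
move=> d0 de.
have e0 : 0 < eps by apply: lt_trans de.
have ex : exists m, eps * (2^-1) ^+ m <= d.
  have hb := @archi_boundP R (eps / d) (ltW (divr_gt0 e0 d0)).
  set m := Num.Def.archi_bound _ in hb.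
  exists m.
  have h2 : (m%:R : R) <= 2 ^+ m.
    by rewrite -natrX ler_nat; apply: ltnW; exact: ltn_expl.
  have h3 : eps / d < 2 ^+ m := lt_le_trans hb h2.
  rewrite ltr_pdivrMr // in h3.
  rewrite exprVn ler_pdivrMr ?exprn_gt0 // mulrC ltW //.
have ex' := ex.
case: (ex_minnP ex') => m hm hmin.
case: m hm hmin => [|j] hm hmin.
  by move: hm; rewrite expr0 mulr1 leNgt de.
exists j; split => //.
rewrite ltNge; apply/negP => /hmin; by rewrite ltnn.
Qed.

Lemma sq_le_dist (a b c : R) : `|a| <= Num.sqrt (a ^+ 2 + b ^+ 2 + c ^+ 2).
Proof.
by rewrite -sqrtr_sqr ler_wsqrtr // -addrA lerDl addr_ge0 // ?sqr_ge0.
Qed.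

Lemma coord_le (z x : R * R * R) :
  [/\ `|z.1.1 - x.1.1| <= dist3 z x, `|z.1.2 - x.1.2| <= dist3 z x & `|z.2 - x.2| <= dist3 z x].
Proof.
rewrite /dist3; split; first exact: sq_le_dist.
  rewrite (addrC ((z.1.1 - x.1.1) ^+ 2)); exact: sq_le_dist.
by rewrite [X in Num.sqrt X]addrC addrA; exact: sq_le_dist.
Qed.

Local Open Scope ereal_scope.
Lemma leb3_box_le x (s rho : R) : (0 <= s)%R -> (0 <= rho)%R ->
  @leb3 R (box x s rho) <= ((2 * s) * (2 * Num.min s rho) ^+ 2)%:E.
Proof.
move=> s0 r0; rewrite leb3_box.
have h1 : lebesgue_measure [set` `[x.1.1 - s, x.1.1 + s]%R] <= (2 * s)%:E.
  have E := lebesgue_measure_itv `[x.1.1 - s, x.1.1 + s]%R.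
  rewrite E /= lte_fin; case: ifP => _; last by rewrite lee_fin mulr_ge0.
  by rewrite lee_fin; lra.
have h2 (c : R) : lebesgue_measure ([set` `[c - s, c + s]%R] `&` [set` `[- rho, rho]%R])
    <= (2 * Num.min s rho)%:E.
  case: (leP s rho) => sr.
    have := leb_itvI (c - s) (c + s) (- rho) rho ltac:(lra).
    move/le_trans; apply; rewrite lee_fin; lra.
  rewrite setIC; have := leb_itvI (- rho) rho (c - s) (c + s) ltac:(lra).
  move/le_trans; apply; rewrite lee_fin; lra.
have -> : ((2 * s) * (2 * Num.min s rho) ^+ 2)%:E =
    (2 * s)%:E * (2 * Num.min s rho)%:E * (2 * Num.min s rho)%:E.
  by rewrite -!EFinM; congr EFin; ring.
apply: lee_pmul.
- apply: mule_ge0; exact: measure_ge0.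
- exact: measure_ge0.
- apply: lee_pmul; [exact: measure_ge0|exact: measure_ge0|exact h1|exact (h2 x.1.2)].
- exact (h2 x.2).
Qed.

Lemma Kint_le eps x n F rho : (0 < eps)%R -> (0 <= F)%R -> (0 <= rho)%R ->
  (forall z, (dist3 z x < eps)%R -> Vn n z != 0%R ->
     (`|Vn n z| <= F /\ `|z.1.2| <= rho /\ `|z.2| <= rho)%R) ->
  Kint eps x n <= \sum_(j <oo) (16 * F * (Num.min (eps * (2^-1)^+j) rho)^+2)%:E.
Proof.
move=> e0 F0 r0 hV.
pose s j := (eps * (2^-1)^+j)%R.
have s0 j : (0 < s j)%R by exact: half_pow_gt0.
pose g j (z : R * R * R) := ((F * 2 / s j) * \1_(box x (s j) rho) z)%:E.
have c0 j : (0 <= F * 2 / s j)%R by rewrite divr_ge0 ?mulr_ge0 // ltW.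
have g0 j z : 0 <= g j z by rewrite lee_fin mulr_ge0.
rewrite /Kint.
apply: (@le_trans _ _ (\int[@leb3 R]_z (\sum_(j <oo) g j z))); first apply: int_le_T.
- by move=> z _; rewrite lee_fin divr_ge0 // sqrtr_ge0.
- by move=> z; exact: nneseries_ge0.
- move=> z /= hz.
  have [V0|V0] := eqVneq (Vn n z) 0%R.
    by rewrite V0 normr0 mul0r; exact: nneseries_ge0.
  have [d0|d0] := eqVneq (dist3 z x) 0%R.
    by rewrite d0 invr0 mulr0; exact: nneseries_ge0.
  have dpos : (0 < dist3 z x)%R by rewrite lt_def d0 sqrtr_ge0.
  have [j [hj1 hj2]] := dyadic _ _ dpos hz.
  have [hVF [h2 h3]] := hV z hz V0.
  apply: (@le_trans _ _ (g j z)); last first.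
    apply: le_trans (nneseries_lim_ge (j.+1) _); last by move=> *; exact: g0.
    rewrite big_nat_recr //= lee_paddl //; exact: sume_ge0.
  have [c1 c2 c3] := coord_le z x.
  have inbox : box x (s j) rho z.
    rewrite /box /=; split; first split.
    - rewrite in_itv /=; move: c1; rewrite ler_norml => /andP [? ?].
      apply/andP; split; rewrite /s; lra.
    - split; rewrite /= in_itv /=.
        move: c2; rewrite ler_norml => /andP [? ?]; apply/andP; split; rewrite /s; lra.
      move: h2; rewrite ler_norml => /andP [? ?]; apply/andP; split; lra.
    - split; rewrite /= in_itv /=.
        move: c3; rewrite ler_norml => /andP [? ?]; apply/andP; split; rewrite /s; lra.
      move: h3; rewrite ler_norml => /andP [? ?]; apply/andP; split; lra.
  rewrite /g indicE mem_set // mulr1 lee_fin.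
  apply: (@le_trans _ _ (F / dist3 z x)%R).
    by rewrite ler_wpM2r // invr_ge0 ltW.
  rewrite -mulrA ler_wpM2l //.
  have hh : (s j / 2 <= dist3 z x)%R by move: hj1; rewrite exprSr mulrA /s; lra.
  have -> : (2 / s j = (s j / 2)^-1)%R by rewrite invf_div.
  by rewrite lef_pV2 ?posrE // divr_gt0.
rewrite integral_nneseries //; last first.
  move=> j; apply/measurable_realfun.measurable_EFinP; apply: measurable_realfun.measurable_funM.
    exact: measurable_cst.
  by apply: measurable_realfun.measurable_indic; exact: mbox.
apply: lee_nneseries.
  by move=> j _ _; apply: integral_ge0 => z _; exact: g0.
move=> j _; rewrite /g.
have := @integralZl_indic _ _ _ (@leb3 R) setT measurableT (fun _ => box x (s j) rho) (F * 2 / s j).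
move=> ->; last exact: mbox; last by move=> /lt_geF; rewrite c0.
  rewrite integral_indic //; last exact: mbox.
  rewrite setIT.
  have hb := leb3_box_le x (s j) rho (ltW (s0 j)) r0.
  apply: le_trans (lee_pmul _ _ (lexx _) hb) _.
  - by rewrite lee_fin.
  - exact: measure_ge0.
  rewrite -EFinM lee_fin le_eqVlt; apply/orP; left; apply/eqP.
  have := s0 j; rewrite /s => hs; field.
  by rewrite expf_neq0 ?gt_eqF //= ?invr_gt0.

Qed.
End S.

Section SA. Variable R : realType.

Lemma geo_sum (eps : R) (N k : nat) :
  \sum_(i < k) (eps * (2^-1) ^+ (N + i)) ^+ 2 + 4/3 * (eps * (2^-1) ^+ (N + k)) ^+ 2
  = 4/3 * (eps * (2^-1) ^+ N) ^+ 2.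
Proof.
elim: k => [|k IH]; first by rewrite big_ord0 add0r addn0.
rewrite big_ord_recr /= -IH addnS (exprS (2^-1) (N + k)).
set q := (2^-1) ^+ (N + k); by field.
Qed.

Lemma partial_bound (eps rho : R) (N m : nat) : 0 <= eps -> 0 <= rho ->
  \sum_(0 <= j < m) (Num.min (eps * (2^-1) ^+ j) rho) ^+ 2
  <= N%:R * rho ^+ 2 + 4/3 * (eps * (2^-1) ^+ N) ^+ 2.
Proof.
move=> e0 r0.
have s0 j : 0 <= eps * (2^-1) ^+ j by rewrite mulr_ge0 // exprn_ge0 // invr_ge0.
have t_rho j : (Num.min (eps * (2^-1) ^+ j) rho) ^+ 2 <= rho ^+ 2.
  have := s0 j; case: (leP (eps * (2^-1) ^+ j) rho) => h h0 //; nra.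
have t_s j : (Num.min (eps * (2^-1) ^+ j) rho) ^+ 2 <= (eps * (2^-1) ^+ j) ^+ 2.
  have := s0 j; case: (leP (eps * (2^-1) ^+ j) rho) => h h0 //; nra.
have hfirst k : (k <= N)%N -> \sum_(0 <= j < k) (Num.min (eps * (2^-1) ^+ j) rho) ^+ 2
    <= N%:R * rho ^+ 2.
  move=> kN; apply: (le_trans (ler_sum _ (fun j _ => t_rho j))).
  rewrite sumr_const_nat subn0 -[_ *+ k]mulr_natl; apply: ler_wpM2r; rewrite ?sqr_ge0 ?ler_nat //.
have q0 : 0 <= 4/3 * (eps * (2^-1) ^+ N) ^+ 2 by rewrite mulr_ge0 // sqr_ge0.
case: (leqP m N) => hm.
  by apply: le_trans (hfirst _ hm) _; rewrite lerDl.
rewrite (@big_cat_nat _ _ _ N 0 m _ _ (leq0n N) (ltnW hm)) /=; apply: lerD; first exact: hfirst.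
apply: (le_trans (ler_sum _ (fun j _ => t_s j))).
rewrite -{1}(add0n N) big_addn big_mkord.
rewrite -(geo_sum eps N (m - N)); under eq_bigr do rewrite addnC.
by rewrite lerDl mulr_ge0 // sqr_ge0.
Qed.

End SA.
Section T. Variable R : realType.
Local Open Scope ereal_scope.
Lemma series_bound (eps rho F : R) (N : nat) : (0 <= eps)%R -> (0 <= rho)%R -> (0 <= F)%R ->
  \sum_(j <oo) (16 * F * (Num.min (eps * (2^-1)^+j) rho)^+2)%:E
  <= (16 * F * (N%:R * rho ^+ 2 + 4/3 * (eps * (2^-1) ^+ N) ^+ 2))%:E.
Proof.
move=> e0 r0 F0.
apply: lime_le.
  by apply: is_cvg_nneseries => j _ _; rewrite lee_fin; apply: mulr_ge0; rewrite ?sqr_ge0 ?mulr_ge0.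
apply: nearW => m; rewrite sumEFin lee_fin -mulr_sumr.
by apply: ler_wpM2l; [rewrite mulr_ge0 | exact: partial_bound].

Qed.
End T.

Section SB. Variable R : realType.

Lemma ln2_ge : 2^-1 <= ln (2 : R).
Proof.
have h : 2^-1 <= expR (- 2^-1 : R) by have := expR_ge1Dx (- 2^-1 : R); lra.
have hm := expRxMexpNx_1 (2^-1 : R).
have hp := expR_gt0 (2^-1 : R).
have he : expR (2^-1 : R) <= 2 by nra.
by rewrite -[X in X <= _](expRK (2^-1)) ler_ln ?posrE ?expR_gt0.
Qed.

Lemma ln_le_16 (x : R) : 0 < x -> x <= 16^-1 -> ln x <= -2.
Proof.
move=> x0 x16.
have h1 : ln x <= ln (16^-1 : R) by rewrite ler_ln ?posrE.
have h2 : ln (16^-1 : R) = - (ln (2 : R) *+ 4).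
  by rewrite lnV ?posrE // -lnXn // -natrX.
have := ln2_ge; rewrite h2 in h1; rewrite mulrS !mulrSr mulr0n add0r in h1; lra.
Qed.


Lemma main_est (a eps : R) : 0 < a -> 0 < eps -> eps <= 16^-1 ->
  exists N : nat,
   16 * (2 / (a * (- ln (Num.min (2 * a) (20^-1))) * ln (- ln (Num.min (2 * a) (20^-1)))))
     * (N%:R * (Num.sqrt (2 * a)) ^+ 2 + 4/3 * (eps * (2^-1) ^+ N) ^+ 2)
   <= 86 * eps + 139 / ln (- ln eps).
Proof.
move=> a0 e0 e16.
set mn := Num.min (2 * a) (20^-1).
set M := - ln mn.
set L := - ln eps.
have mn0 : 0 < mn by rewrite lt_min mulr_gt0 //= invr_gt0.
have mn2a : mn <= 2 * a by rewrite ge_min lexx.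
have M2 : 2 <= M.
  have := @ln_le_16 mn mn0; rewrite /M; suff: mn <= 16^-1 by move=> h /(_ h); lra.
  by rewrite ge_min; apply/orP; right; rewrite lef_pV2 ?posrE // ler_nat.
have L2 : 2 <= L by have := @ln_le_16 eps e0 e16; rewrite /L; lra.
have ln2 := ln2_ge.
have lnMge : 2^-1 <= ln M.
  by apply: le_trans ln2 _; rewrite ler_ln ?posrE //; lra.
have lnLge : 2^-1 <= ln L.
  by apply: le_trans ln2 _; rewrite ler_ln ?posrE //; lra.
have lnL0 : 0 < ln L by lra.
have lnM0 : 0 < ln M by lra.
have t2 : 0 <= 139 / ln L by rewrite divr_ge0 // ltW.
rewrite sqr_sqrtr; last by rewrite mulr_ge0 // ltW.
case: (ltP (2 * a) eps) => ha; last first.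
  exists 0%N; rewrite expr0 mulr1 mul0r add0r.
  apply: (@le_trans _ _ (86 * eps)); last lra.
  have hMP : 1 <= M * ln M by nra.
  have -> : 16 * (2 / (a * M * ln M)) * (4 / 3 * eps ^+ 2)
      = (128/3 * eps ^+ 2) / (a * (M * ln M)).
    by field; rewrite !gt_eqF //; nra.
  rewrite ler_pdivrMr; last by apply: mulr_gt0 => //; nra.
  have h1 : eps ^+ 2 <= 2 * a * eps by rewrite expr2; nra.
  have h2 : a * eps <= a * eps * (M * ln M) by rewrite ler_peMr // mulr_ge0 // ltW.
  nra.
have ML : L <= M.
  rewrite /L /M lerN2 ler_ln ?posrE //; apply: le_trans mn2a _; exact: ltW.
have lnML : ln L <= ln M by rewrite ler_ln ?posrE //; lra.
have [N [hN1 hN2]] : exists N : nat, (eps * (2^-1) ^+ N) ^+ 2 <= 2 * a /\ N%:R <= 1 + M.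
  have r0 : 0 < Num.sqrt (2 * a) by rewrite sqrtr_gt0 mulr_gt0.
  case: (leP eps (Num.sqrt (2 * a))) => hr.
    exists 0%N; rewrite expr0 mulr1; split; last lra.
    rewrite -(@sqr_sqrtr _ (2 * a)); last by rewrite mulr_ge0 // ltW.
    by rewrite ler_sqr ?nnegrE // ltW.
  have [j [hj1 hj2]] := @dyadic R _ _ r0 hr.
  have a2 : 0 <= 2 * a by rewrite mulr_ge0 // ltW.
  have sq := sqr_sqrtr a2.
  have w0 : 0 < (2^-1 : R) ^+ j by rewrite exprn_gt0 // invr_gt0.
  have s1 : 0 <= eps * (2^-1) ^+ j.+1 by rewrite mulr_ge0 ?exprn_ge0 ?invr_ge0 // ltW.
  exists j.+1; split.
    rewrite -sq; move: hj1 s1; set u := eps * _; set v := Num.sqrt _ => h1 h2; nra.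
  have hw : 2 * a < (2^-1) ^+ (j * 2).
    rewrite exprM; move: hj2 w0; set w := (2^-1 : R) ^+ j => h1 h2.
    have : 0 <= Num.sqrt (2 * a) by exact: sqrtr_ge0.
    move: sq; set v := Num.sqrt _ => sq hv.
    have e1 : eps <= 1 by lra.
    have h3 : v * v < (eps * w) * (eps * w) by apply: ltr_pM.
    have h4 : (eps * w) * (eps * w) <= w * w.
      by rewrite mulrACA ler_piMl ?mulr_ge0 ?ltW //; nra.
    rewrite -sq !expr2; lra.
  have hl : ln (2 * a) < ln ((2^-1 : R) ^+ (j * 2)).
    by rewrite ltr_ln ?posrE // ?mulr_gt0 // exprn_gt0 // invr_gt0.
  rewrite lnXn ?invr_gt0 // lnV ?posrE // -[_ *+ (j * 2)]mulr_natr natrM in hl.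
  have hm : ln mn <= ln (2 * a) by rewrite ler_ln ?posrE // mulr_gt0.
  have j0 : (0 : R) <= j%:R by [].
  rewrite -natr1 /M; nra.
have E0 : N%:R * (2 * a) + 4 / 3 * (eps * 2^-1 ^+ N) ^+ 2 <= 13/3 * a * M.
  have : (0 : R) <= N%:R by [].
  nra.
exists N. have -> : 16 * (2 / (a * M * ln M)) * (N%:R * (2 * a) + 4 / 3 * (eps * 2^-1 ^+ N) ^+ 2)
   = 32 * (N%:R * (2 * a) + 4 / 3 * (eps * 2^-1 ^+ N) ^+ 2) / (a * M * ln M).
  by field; rewrite !gt_eqF //; lra.
apply: (@le_trans _ _ (139 / ln M)).
  rewrite ler_pdivrMr; last by rewrite !mulr_gt0 //; lra.
  have -> : 139 / ln M * (a * M * ln M) = 139 * a * M by field; rewrite gt_eqF.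
  have : 0 < a * M by rewrite mulr_gt0 //; lra.
  nra.
apply: (@le_trans _ _ (139 / ln L)); last by lra.
by rewrite ler_pM2l // lef_pV2 ?posrE.
Qed.
End SB.

Section SC. Variable R : realType.

Lemma lnln_facts (y : R) : 0 < y -> y <= 16^-1 -> 2 <= - ln y /\ 2^-1 <= ln (- ln y).
Proof.
move=> y0 y16; have h := @ln_le_16 R y y0 y16.
split; first lra.
by apply: le_trans (ln2_ge R) _; rewrite ler_ln ?posrE //; lra.
Qed.

Lemma cyl_unique (k i : nat) (t : R) : k%:R <= t <= k%:R + 4^-1 ->
  i%:R <= t <= i%:R + 4^-1 -> i = k.
Proof.
move=> /andP [h1 h2] /andP [h3 h4].
case: (ltngtP i k) => // hik.
  have h5 : i%:R + 1 <= (k%:R : R) by rewrite natr1 ler_nat.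
  exfalso; lra.
have h5 : k%:R + 1 <= (i%:R : R) by rewrite natr1 ler_nat.
exfalso; lra.
Qed.

Lemma V_supp (n : nat) (z : R * R * R) : Vn n z != 0 ->
  exists k, [/\ (1 <= k <= n)%N, cyl k (Num.sqrt (k%:R / (25 * n%:R))) z &
     Vn n z = f_fun (z.1.1 / (25 * n%:R))].
Proof.
move=> V0.
case: (pselect (exists k, (1 <= k <= n)%N /\ cyl k (Num.sqrt (k%:R / (25 * n%:R))) z)).
  move=> [k [hk hc]]; exists k; split => //.
  rewrite /Vn.
  rewrite (bigD1_seq k) /=; last exact: iota_uniq.
    rewrite indicE mem_set // big1 ?addr0 ?mulr1 //.
    move=> i ik; rewrite indicE memNset // => hi.
    move: hc hi => [hc1 _] [hi1 _].
    by move: ik; rewrite (cyl_unique _ _ _ hc1 hi1) eqxx.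
  by rewrite mem_index_iota ltnS.
move=> nex; exfalso; move: V0; rewrite /Vn big_nat_cond big1 ?mulr0 ?eqxx //.
move=> k /andP [/andP [k1 kn] _]; rewrite indicE memNset // => hc.
by apply: nex; exists k; split => //; rewrite k1 -ltnS.
Qed.

Lemma V_bound (eps : R) x n z : (0 < n)%N -> eps <= 2^-1 -> dist3 z x < eps -> Vn n z != 0 ->
  let a := x.1.1 / (25 * n%:R) in
  let M := - ln (Num.min (2 * a) 20^-1) in
  [/\ 0 < a, `|Vn n z| <= 2 / (a * M * ln M), `|z.1.2| <= Num.sqrt (2 * a)
     & `|z.2| <= Num.sqrt (2 * a)].
Proof.
move=> n0 e2 hz V0 a M.
have [k [/andP [k1 kn] [/andP [hk1 hk2] hw] ->]] := V_supp _ _ V0.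
have c0 : (0 : R) < 25 * n%:R by rewrite mulr_gt0 // ltr0n.
have k1R : (1 : R) <= k%:R by rewrite ler1n.
have knR : (k%:R : R) <= n%:R by rewrite ler_nat.
have [c1 _ _] := coord_le R z x.
move: c1; rewrite ler_norml => /andP [c1 c2].
have dz : dist3 z x < 2^-1 by lra.
set z1 := z.1.1 in hk1 hk2 c1 c2 *.
have a0 : 0 < a by rewrite /a divr_gt0 //; lra.
have kc0 : (0 : R) <= k%:R / (25 * n%:R) by rewrite divr_ge0 // ltW.
rewrite sqr_sqrtr // in hw.
set u := z1 / (25 * n%:R).
have u_ge : (k%:R : R) / (25 * n%:R) <= u by rewrite ler_pM2r ?invr_gt0.
have u_2a : u <= 2 * a by rewrite /u /a mulrA ler_pM2r ?invr_gt0 //; lra.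
have a_2u : a / 2 <= u.
  rewrite /u /a -mulrA [_^-1 * _]mulrC mulrA ler_pM2r ?invr_gt0 //; lra.
have u20 : u <= 20^-1.
  rewrite /u ler_pdivrMr // -[X in _ <= X](mulKf (_ : (20 : R) != 0)) //.
  have : n%:R * 4 + 1 <= (5 : R) * n%:R by lra.
  move=> h; rewrite mulrA; lra.
have u0 : 0 < u by lra.
set mn := Num.min (2 * a) 20^-1.
have mn0 : 0 < mn by rewrite lt_min mulr_gt0 //= invr_gt0.
have umn : u <= mn by rewrite le_min u_2a u20.
have mn16 : mn <= 16^-1.
  by rewrite ge_min; apply/orP; right; rewrite lef_pV2 ?posrE // ler_nat.
have [M2' lnM'] := lnln_facts _ mn0 mn16.
have M2 : 2 <= M by rewrite /M -/mn.
have lnM : 2^-1 <= ln M by rewrite /M -/mn.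
have lnu : ln u <= ln mn by rewrite ler_ln ?posrE.
have lnu0 : ln u < 0 by rewrite ln_lt0 // u0 /=; lra.
have absu : `|ln u| = - ln u by rewrite ltr0_norm.
have Mu : M <= `|ln u|.
  by rewrite absu /M -/mn lerN2.
have lnlnu : ln M <= ln `|ln u|.
  rewrite ler_ln ?posrE //; lra.
have hk0 : 0 < ln M by lra.
split => //.
- rewrite /f_fun ger0_norm; last first.
    by rewrite invr_ge0 !mulr_ge0 // ?normr_ge0 //; apply: ltW; lra.
  have -> : 2 / (a * M * ln M) = (a / 2 * M * ln M)^-1 by field; rewrite !gt_eqF //; lra.
  rewrite lef_pV2 ?posrE; last 2 first.
  - by rewrite !mulr_gt0 // ?invr_gt0; lra.
  - by rewrite !mulr_gt0 // ?invr_gt0; lra.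
  apply: ler_pM; [ | | | exact: lnlnu].
  + by rewrite mulr_ge0 // ?divr_ge0 //; lra.
  + lra.
  + by apply: ler_pM => //; [rewrite divr_ge0 //; lra | lra].
- rewrite -(sqrtr_sqr (z.1.2)) ler_wsqrtr //.
  have : z.1.2 ^+ 2 <= z.1.2 ^+ 2 + z.2 ^+ 2 by rewrite lerDl sqr_ge0.
  lra.
- rewrite -(sqrtr_sqr (z.2)) ler_wsqrtr //.
  have : z.2 ^+ 2 <= z.1.2 ^+ 2 + z.2 ^+ 2 by rewrite lerDr sqr_ge0.
  lra.
Qed.

Lemma Kint_zero (eps : R) x n : 0 < eps -> (forall z, dist3 z x < eps -> Vn n z = 0) ->
  (Kint eps x n <= 0)%E.
Proof.
move=> e0 hV.
have h := Kint_le R eps x n 0 0 e0 (lexx _) (lexx _).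
apply: (le_trans (h _)).
  by move=> z hz; rewrite hV ?eqxx.
apply: le_trans (series_bound R eps 0 0 0 (ltW e0) (lexx _) (lexx _)) _.
by rewrite !mulr0 mul0r.
Qed.

Lemma Kint_bound (eps : R) x n : 0 < eps -> eps <= 16^-1 ->
  (Kint eps x n <= (86 * eps + 139 / ln (- ln eps))%:E)%E.
Proof.
move=> e0 e16.
have [_ hl] := lnln_facts _ e0 e16.
have B0 : 0 <= 86 * eps + 139 / ln (- ln eps).
  by rewrite addr_ge0 ?mulr_ge0 // ?(ltW e0) // invr_ge0 (le_trans _ hl) // invr_ge0.
have e2 : eps <= 2^-1 by lra.
case: n => [|n].
  apply: le_trans (Kint_zero _ _ _ e0 _) _; last by rewrite lee_fin.
  by move=> z _; rewrite /Vn big_geq // mulr0.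
set a := x.1.1 / (25 * n.+1%:R).
case: (ltP 0 a) => a0; last first.
  apply: le_trans (Kint_zero _ _ _ e0 _) _; last by rewrite lee_fin.
  move=> z hz; apply/eqP; apply/negP => /negP V0.
  have [a0' _ _ _] := V_bound _ _ _ _ (ltn0Sn n) e2 hz V0.
  by move: a0; rewrite leNgt a0'.
have [N hN] := main_est R a eps a0 e0 e16.
set M := - ln (Num.min (2 * a) 20^-1) in hN.
have mn0 : 0 < Num.min (2 * a) 20^-1 by rewrite lt_min mulr_gt0 //= invr_gt0.
have mn16 : Num.min (2 * a) 20^-1 <= 16^-1.
  by rewrite ge_min; apply/orP; right; rewrite lef_pV2 ?posrE // ler_nat.
have [M2 lnM] := lnln_facts _ mn0 mn16.
have F0 : 0 <= 2 / (a * M * ln M).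
  apply: divr_ge0 => //; apply: mulr_ge0; first apply: mulr_ge0.
  - exact: ltW a0.
  - by apply: le_trans M2.
  - by apply: le_trans lnM; rewrite invr_ge0.
have r0 : 0 <= Num.sqrt (2 * a) by exact: sqrtr_ge0.
apply: le_trans (Kint_le R eps x n.+1 _ _ e0 F0 r0 _) _.
  move=> z hz V0; have [_ h1 h2 h3] := V_bound _ _ _ _ (ltn0Sn n) e2 hz V0.
  by split.
apply: le_trans (series_bound R eps _ _ N (ltW e0) r0 F0) _.
by rewrite lee_fin.
Qed.
End SC.

Lemma B_cvg (R : realType) :
  (fun e : R => 86 * e + 139 / ln (- ln e)) @ (0 : R)^'+ --> 0.
Proof.
apply/cvgrPdist_le => d d0.
set c := 278 / d.
have c0 : 0 < c by rewrite divr_gt0.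
set e0 := Num.min (16^-1 : R) (Num.min (d / 172) (expR (- expR c))).
have e00 : 0 < e0.
  by rewrite !lt_min invr_gt0 ltr0n /= divr_gt0 //= expR_gt0.
near=> e.
have he : 0 < e by near: e; exact: nbhs_right_gt.
have he1 : e < e0 by near: e; exact: nbhs_right_lt.
move: he1; rewrite !lt_min => /and3P [h16 hd hx].
have [_ hl] := lnln_facts R e he (ltW h16).
have hl0 : 0 < ln (- ln e) by apply: lt_le_trans hl; rewrite invr_gt0.
have hlc : c < ln (- ln e).
  have h1 : ln e < - expR c.
    by rewrite -[X in _ < X](expRK) ltr_ln ?posrE ?expR_gt0.
  rewrite ltrNr in h1.
  by rewrite -[X in X < _](expRK c) ltr_ln ?posrE ?expR_gt0 //; apply: lt_trans h1; rewrite expR_gt0.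
have h2 : 139 / ln (- ln e) <= d / 2.
  rewrite ler_pdivrMr // -ler_pdivrMl ?divr_gt0 //.
  apply: ltW; apply: le_lt_trans hlc; rewrite /c le_eqVlt; apply/orP; left.
  by apply/eqP; field; rewrite gt_eqF.
have h3 : 0 <= 139 / ln (- ln e) by rewrite divr_ge0 // ltW.
rewrite sub0r normrN ger0_norm; last by rewrite addr_ge0 // mulr_ge0 // ltW.
lra.
Unshelve. all: by end_near.
Qed.

Theorem corollary4p2 (R : realType) :
  Ksup eps @[eps --> (0 : R)^'+] --> (0 : \bar R).
Proof.
apply: (@squeeze_cvge _ _ _ _ (fun _ => 0%E) _
   (fun e : R => (86 * e + 139 / ln (- ln e))%:E)).
- near=> e.
  have he : 0 < e by near: e; exact: nbhs_right_gt.
  have h16 : e < 16^-1 by near: e; apply: nbhs_right_lt; rewrite invr_gt0.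
  apply/andP; split.
    apply: (@le_trans _ _ (Kint e (0, 0, 0) 0%N)).
      by apply: integral_ge0 => z _; rewrite lee_fin divr_ge0 // sqrtr_ge0.
    by apply: ereal_sup_ubound; exists (0, 0, 0), 0%N.
  apply: ge_ereal_sup => _ [x [n ->]].
  exact: Kint_bound he (ltW h16).
- exact: cvg_cst.
- apply/fine_cvgP; split; first by apply: nearW.
  exact: B_cvg.
Unshelve. all: by end_near.
Qed.
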